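(* Let $G$ be a graph on $n$ vertices, let $j,r$ be positive integers and let $p=p_r(G)$. Then $\sum_{S\in V(G)^j}|N(S)|^r\ge n^{j+r}p^{jr}$. If moreover $p>4jn^{-1/r}$, then $\sum_{S\in V(G)_j}|N(S)|^r\ge\frac{1}{2^{j+1}}n^{j+r}p^{jr}$.
   Context: All graphs are finite and simple. $p_r(G)=t_{K_{1,r}}(G)^{1/r}=\frac1n\left(\frac1n\sum_{v\in V(G)}d(v)^r\right)^{1/r}$ where $n=|G|$. For a set $W$ and positive integer $k$, $W^k$ is the set of sequences of length $k$ of elements of $W$ (repetitions allowed) and $W_k$ is the set of such sequences whose $k$ elements are pairwise distinct. For a sequence $S$ in $V(G)$, $N(S)$ is the set of vertices adjacent to every vertex of $S$. *)

(* Defs.v *)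
From HB Require Import structures.
From mathcomp Require Import all_boot all_order all_algebra.
From mathcomp Require Import all_classical all_reals all_analysis.
Set Implicit Arguments. Unset Strict Implicit. Unset Printing Implicit Defensive.
Import Order.TTheory GRing.Theory Num.Theory.
Local Open Scope ring_scope.

Definition simple_graph (T : finType) (e : rel T) : Prop :=
  symmetric e /\ irreflexive e.

Definition deg (T : finType) (e : rel T) (v : T) : nat := #|[set u | e v u]|.

Definition common_nbhd (T : finType) (e : rel T) (S : seq T) : {set T} :=
  [set v | all (fun s => e s v) S].

Definition p_r (R : realType) (T : finType) (e : rel T) (r : nat) : R :=
  (#|T|%:R)^-1 *
  (((#|T|%:R)^-1 * \sum_(v : T) ((deg e v)%:R : R) ^+ r) `^ ((r%:R : R)^-1)).

(* Main.v *)
Require Import Defs.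
From HB Require Import structures.
From mathcomp Require Import all_boot all_order all_algebra.
From mathcomp Require Import all_classical all_reals all_analysis.
From mathcomp Require Import ring lra.
Import Order.TTheory GRing.Theory Num.Theory.
Local Open Scope ring_scope.

Lemma card_all_tuples (T : finType) n (A : pred T) :
  #|[set t : n.-tuple T | all A t]| = (#|A| ^ n)%N.
Proof.
elim: n A => [|n IHn] A.
  by rewrite (@fintype.eq_card1 _ [tuple]) // => t; rewrite [t]tuple0 inE.
rewrite -sum1dep_card (partition_big (@thead _ _) A) /= => [|t]; last first.
  by case/tupleP: t => x t; case/andP.
rewrite expnS -sum_nat_const; apply: eq_bigr => x Ax.
rewrite -(IHn A) -sum1dep_card.
rewrite (reindex (fun t : n.-tuple T => [tuple of x :: t])) /=; last first.
  pose ttail (t : n.+1.-tuple T) := [tuple of behead t].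
  exists ttail => [t _ | t /andP[_ /eqP <-]]; first exact: val_inj.
  by rewrite -tuple_eta.
apply: eq_bigl=> t; rewrite Ax theadE eqxx andbT /=.
by [].
Qed.

Lemma powR_root (R : realType) (y : R) r : 0 <= y -> (0 < r)%N ->
  (y `^ ((r%:R : R)^-1)) ^+ r = y.
Proof.
move=> y0 r0; rewrite -powR_mulrn ?powR_ge0 // -powRrM mulVf ?powRr1 //.
by rewrite pnatr_eq0 -lt0n.
Qed.

Local Close Scope ring_scope.

Section DC.
Variables (T : finType) (e : rel T).
Hypothesis esym : symmetric e.
Local Notation NS := (common_nbhd e).

Lemma swapN (S U : seq T) :
  all (fun u => u \in NS S) U = all (fun s => s \in NS U) S.
Proof.
apply/idP/idP => /allP H; apply/allP => s sS; rewrite inE; apply/allP => u uU;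
  have := H u uU; rewrite inE => /allP /(_ s sS); by rewrite esym.
Qed.

Lemma card_as_sum (k : nat) (P : pred (k.-tuple T)) :
  #|[set t | P t]| = \sum_(t : k.-tuple T) (P t : nat).
Proof. by rewrite -sum1dep_card big_mkcond; apply: eq_bigr => t _; case: (P t). Qed.

Lemma dc1 j r :
  \sum_(S : j.-tuple T) #|NS S| ^ r = \sum_(U : r.-tuple T) #|NS U| ^ j.
Proof.
transitivity (\sum_(S : j.-tuple T) \sum_(U : r.-tuple T)
   (all (fun u => u \in NS S) U : nat)).
  apply: eq_bigr => S _; rewrite -card_as_sum card_all_tuples.
  by congr (_ ^ _); apply: eq_card.
rewrite exchange_big; apply: eq_bigr => U _.
rewrite -(@card_all_tuples T j (fun s => s \in NS U)) card_as_sum.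
by apply: eq_bigr => S _; rewrite swapN.
Qed.

Lemma dc2 j r :
  \sum_(S : j.-tuple T | uniq S) #|NS S| ^ r = \sum_(U : r.-tuple T) #|NS U| ^_ j.
Proof.
transitivity (\sum_(S : j.-tuple T) \sum_(U : r.-tuple T)
   ((all (fun u => u \in NS S) U && uniq S) : nat)).
  rewrite big_mkcond; apply: eq_bigr => S _.
  case: (uniq S) => /=; last by rewrite big1 // => U _; rewrite andbF.
  under eq_bigr do rewrite andbT.
  rewrite -card_as_sum card_all_tuples.
  by congr (_ ^ _); apply: eq_card.
rewrite exchange_big; apply: eq_bigr => U _.
rewrite -(@card_uniq_tuples T j (fun s => s \in NS U)) card_as_sum.
apply: eq_bigr => S _; rewrite swapN; done.
Qed.

Lemma dc3 r :
  \sum_(U : r.-tuple T) #|NS U| = \sum_(v : T) deg e v ^ r.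
Proof.
transitivity (\sum_(U : r.-tuple T) \sum_(v : T) (all (fun u => e u v) U : nat)).
  apply: eq_bigr => U _; rewrite -sum1dep_card -[in RHS]big_mkcond /=.
  by [].
rewrite exchange_big; apply: eq_bigr => v _.
have -> : deg e v = #|(fun u => e u v) : pred T|.
  by apply: eq_card => u; rewrite inE esym.
by rewrite -card_all_tuples card_as_sum.
Qed.
End DC.

Local Open Scope ring_scope.

Lemma cheb (R : realFieldType) (I : finType) (x : I -> R) (m : nat) :
  (forall i, 0 <= x i) ->
  (\sum_i x i) * (\sum_i x i ^+ m) <= #|I|%:R * \sum_i x i ^+ m.+1.
Proof.
move=> x0.
have H : 0 <= \sum_a \sum_b (x a - x b) * (x a ^+ m - x b ^+ m).
  apply: sumr_ge0 => a _; apply: sumr_ge0 => b _.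
  have mono (u v : R) : 0 <= u -> 0 <= v -> u <= v -> u ^+ m <= v ^+ m.
    by move=> u0 v0 uv; apply: lerXn2r; rewrite ?nnegrE.
  have [le|le] := leP (x a) (x b).
    by rewrite -mulrNN !opprB; apply: mulr_ge0; rewrite subr_ge0 //; apply: mono.
  by apply: mulr_ge0; rewrite subr_ge0; [exact: ltW | apply: mono => //; exact: ltW].
have E : \sum_a \sum_b (x a - x b) * (x a ^+ m - x b ^+ m) =
   2 * (#|I|%:R * \sum_i x i ^+ m.+1 - (\sum_i x i) * (\sum_i x i ^+ m)).
  under eq_bigr do under eq_bigr do rewrite mulrBl !mulrBr.
  under eq_bigr do rewrite !sumrB.
  rewrite !sumrB.
  have e1 : \sum_(i : I) \sum_(j : I) x i * x i ^+ m = #|I|%:R * \sum_i x i ^+ m.+1.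
    rewrite mulr_sumr; apply: eq_bigr => i _; rewrite sumr_const exprS.
    by rewrite mulr_natl.
  have e2 : \sum_(i : I) \sum_(j : I) x j * x j ^+ m = #|I|%:R * \sum_i x i ^+ m.+1.
    rewrite sumr_const mulr_natl; congr (_ *+ _); apply: eq_bigr => i _; by rewrite exprS.
  have e3 : \sum_(i : I) \sum_(j : I) x i * x j ^+ m = (\sum_i x i) * \sum_i x i ^+ m.
    by rewrite mulr_suml; apply: eq_bigr => i _; rewrite mulr_sumr.
  have e4 : \sum_(i : I) \sum_(j : I) x j * x i ^+ m = (\sum_i x i) * \sum_i x i ^+ m.
    by rewrite exchange_big e3.
  lra.
rewrite E in H; nra.
Qed.

Lemma pmean (R : realFieldType) (I : finType) (x : I -> R) (k : nat) :
  (forall i, 0 <= x i) ->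
  (\sum_i x i) ^+ k.+1 <= #|I|%:R ^+ k * \sum_i x i ^+ k.+1.
Proof.
move=> x0; elim: k => [|k IH]; first by rewrite expr0 mul1r expr1 (eq_bigr x (fun i _ => expr1 (x i))).
have s0 : 0 <= \sum_i x i by apply: sumr_ge0.
rewrite exprS (le_trans (ler_wpM2l s0 IH)) //.
rewrite mulrCA exprSr -mulrA ler_wpM2l ?exprn_ge0 //.
exact: cheb.
Qed.

Lemma ffact_lb (x j : nat) : ((x - j) ^ j <= x ^_ j)%N.
Proof.
elim: j x => [|j IH] x; first by [].
rewrite ffactnS expnS; apply: leq_mul; first exact: leq_subr.
by apply: leq_trans (IH x.-1); rewrite subnS -subn1 subnAC subn1.
Qed.

Lemma ffact_lbR (R : realFieldType) (x j : nat) :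
  (x%:R / 2) ^+ j - j%:R ^+ j <= ((x ^_ j)%:R : R).
Proof.
have h0 : 0 <= ((x ^_ j)%:R : R) by [].
case: (leqP (2 * j) x) => hx.
  apply: le_trans (_ : ((x - j) ^ j)%:R <= _); last by rewrite ler_nat ffact_lb.
  rewrite natrX lerBlDr.
  apply: (le_trans _ (_ : (((x - j)%:R : R)) ^+ j <= _)); last by rewrite lerDl exprn_ge0.
  apply: lerXn2r; rewrite ?nnegrE ?divr_ge0 //.
  rewrite natrB; last by apply: leq_trans hx; rewrite leq_pmull.
  rewrite ler_pdivrMr //.
  have : ((2 * j)%:R : R) <= x%:R by rewrite ler_nat.
  rewrite natrM; lra.
apply: le_trans h0; rewrite subr_le0; apply: lerXn2r; rewrite ?nnegrE ?divr_ge0 //.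
rewrite ler_pdivrMr //.
have : (x%:R : R) <= (2 * j)%:R by rewrite ler_nat ltnW.
rewrite natrM; lra.
Qed.

Theorem lemma3p5 (R : realType) (T : finType) (e : rel T)
  (hG : simple_graph e) (hn : (0 < #|T|)%N) (j r : nat)
  (hj : (0 < j)%N) (hr : (0 < r)%N) :
  (#|T|%:R : R) ^+ (j + r) * (p_r R e r) ^+ (j * r)
    <= \sum_(S : j.-tuple T) ((#|common_nbhd e S|)%:R : R) ^+ r
  /\
  (4 * j%:R * (#|T|%:R : R) `^ (- (r%:R)^-1) < p_r R e r ->
   (2 ^+ (j + 1))^-1 * (#|T|%:R : R) ^+ (j + r) * (p_r R e r) ^+ (j * r)
    <= \sum_(S : j.-tuple T | uniq S) ((#|common_nbhd e S|)%:R : R) ^+ r).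
Proof.
have esym : symmetric e by case: hG.
set c : R := #|T|%:R.
have c0 : 0 < c by rewrite /c ltr0n.
have cn0 : c != 0 by rewrite lt0r_neq0.
set DR : R := \sum_(v : T) ((deg e v)%:R : R) ^+ r.
have DR0 : 0 <= DR by apply: sumr_ge0 => v _; rewrite exprn_ge0.
set C : R := c ^+ r.
have C0 : 0 < C by rewrite exprn_gt0.
set m : R := DR / C.
have m0 : 0 <= m by rewrite divr_ge0 // ltW.
set p := p_r R e r.
have pr : p ^+ r = m / c.
  rewrite /p /p_r -/c -/DR exprMn powR_root //; last by rewrite mulr_ge0 // invr_ge0 ltW.
  rewrite /m /C exprVn; field.
  by rewrite -/c cn0 expf_neq0.
have p0 : 0 <= p.
  rewrite /p /p_r -/c; apply: mulr_ge0; [by rewrite invr_ge0 ltW | exact: powR_ge0].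
have B_eq : c ^+ (j + r) * p ^+ (j * r) = C * m ^+ j.
  rewrite mulnC exprM pr expr_div_n exprD /C; field.
  by rewrite expf_neq0 // lt0r_neq0.
set x := fun U : r.-tuple T => ((#|common_nbhd e U|)%:R : R).
have x0 : forall U, 0 <= x U by move=> U; rewrite /x.
have cardI : (#|{: r.-tuple T}|%:R : R) = C by rewrite card_tuple natrX.
have F1 : \sum_(S : j.-tuple T) ((#|common_nbhd e S|)%:R : R) ^+ r
          = \sum_U x U ^+ j.
  have := congr1 (fun k => k%:R : R) (@dc1 T e esym j r); rewrite /= !natr_sum.
  by under eq_bigr do rewrite natrX; under [in RHS]eq_bigr do rewrite natrX.
have F3 : \sum_U x U = DR.
  have := congr1 (fun k => k%:R : R) (@dc3 T e esym r); rewrite /= !natr_sum.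
  by under [in RHS]eq_bigr do rewrite natrX.
have part1 : C * m ^+ j <= \sum_U x U ^+ j.
  case: j hj {F1 B_eq} => // k _.
  have := @pmean R _ x k x0; rewrite F3 cardI.
  have -> : DR ^+ k.+1 = C ^+ k * (C * m ^+ k.+1).
    have -> : DR = C * m by rewrite /m mulrC divfK // lt0r_neq0.
    by rewrite exprMn exprS; ring.
  by rewrite ler_pM2l // exprn_gt0.
split; first by rewrite B_eq F1.
move=> hyp.
have F2 : \sum_(S : j.-tuple T | uniq S) ((#|common_nbhd e S|)%:R : R) ^+ r
          = \sum_(U : r.-tuple T) ((#|common_nbhd e U| ^_ j)%:R : R).
  have := congr1 (fun k => k%:R : R) (@dc2 T e esym j r); rewrite /= !natr_sum.
  by under eq_bigr do rewrite natrX.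
have a0 : 0 <= 4 * j%:R * c `^ (- (r%:R)^-1) by rewrite !mulr_ge0 ?powR_ge0.
have h1 := ltrXn2r r a0 hyp.
rewrite exprMn powRN exprVn powR_root ?ltW // pr -lt0n hr in h1.
rewrite ltr_pM2r ?invr_gt0 // in h1.
have j1 : (1 : R) <= j%:R by rewrite ler1n.
have h3 : 4 * j%:R <= (4 * j%:R : R) ^+ r.
  rewrite -{1}(expr1 (4 * j%:R : R)) ler_eXn2l //; lra.
have h4 : (4 * j%:R : R) ^+ j <= m ^+ j.
  apply: lerXn2r; first by rewrite nnegrE; lra.
    by rewrite nnegrE.
  by apply: ltW; exact: le_lt_trans h3 h1.
have h5 : 2 ^+ (j + 1) * j%:R ^+ j <= (4 * j%:R : R) ^+ j.
  rewrite exprMn; apply: ler_wpM2r; first by rewrite exprn_ge0.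
  have -> : (4 : R) = 2 * 2 by rewrite -natrM.
  rewrite exprMn exprD expr1 ler_wpM2l ?exprn_ge0 //.
  by rewrite -{1}(expr1 (2 : R)) ler_eXn2l // ?ltr1n.
have key : 2 ^+ (j + 1) * (C * j%:R ^+ j) <= C * m ^+ j.
  rewrite mulrCA ler_pM2l //; exact: le_trans h5 h4.
have low : (\sum_U x U ^+ j) / 2 ^+ j - C * j%:R ^+ j
           <= \sum_(U : r.-tuple T) ((#|common_nbhd e U| ^_ j)%:R : R).
  apply: (@le_trans _ _ (\sum_(U : r.-tuple T) ((x U / 2) ^+ j - j%:R ^+ j))).
    rewrite sumrB sumr_const card_tuple -[_ *+ (_ ^ _)%N]mulr_natl natrX -/c -/C.
    have eqn : \sum_(U : r.-tuple T) (x U / 2) ^+ j = (\sum_(U : r.-tuple T) x U ^+ j) / 2 ^+ j.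
      by rewrite mulr_suml; apply: eq_bigr => U _; rewrite expr_div_n.
    by rewrite eqn.
  refine (@ler_sum R _ _ _ _ _ _) => U _; exact: ffact_lbR.
rewrite -mulrA B_eq F2; apply: le_trans low.
move: key part1; rewrite exprD expr1.
set Z := 2 ^+ j; set B := C * m ^+ j; set X := \sum_U x U ^+ j; set Y := C * _.
have Z0 : 0 < Z by rewrite exprn_gt0.
move=> key part1.
have -> : Y = Z^-1 * (Z * Y) by rewrite mulKf // lt0r_neq0.
rewrite invfM.
have W0 : 0 < Z^-1 by rewrite invr_gt0.
set W := Z^-1; set K := Z * Y.
rewrite -mulrA in key.
have key' : 2 * K <= B by rewrite /K mulrCA.
have H : 0 <= X - K - B / 2 by lra.
have -> : X * W - W * K = W / 2 * B + W * (X - K - B / 2) by ring.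
by rewrite lerDl mulr_ge0 // ltW.
Qed.
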